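(* Let $\mathcal{X}\subseteq\mathbb{R}^d$ and let $\mathcal{M}$ be a mechanism on weighted data sets admitting a weighted distinguishability profile $\epsilon\colon[1,\infty)\times\mathcal{X}\to\mathbb{R}_{\ge0}$ that is differentiable in $w$, with $\epsilon'(w,\mathbf{x})=\partial\epsilon(w,\mathbf{x})/\partial w$, and let $\tilde\epsilon(\mathbf{x})=\epsilon(1,\mathbf{x})$ (the distinguishability profile of the unweighted counterpart $\widetilde{\mathcal{M}}(\{\mathbf{x}_i\})=\mathcal{M}(\{(1,\mathbf{x}_i)\})$). Let $S$ be any Poisson importance sampler, with selection-probability function $q$, and let $\psi(\mathbf{x})=\log\big(1+q(\mathbf{x})(e^{\epsilon(1/q(\mathbf{x}),\mathbf{x})}-1)\big)$ be the distinguishability profile of $\mathcal{M}\circ S$. Let $\mathbf{x}\in\mathcal{X}$. If $\epsilon(w,\mathbf{x})\le w\,\epsilon'(w,\mathbf{x})$ for all $w\ge1$, then $\psi(\mathbf{x})\ge\tilde\epsilon(\mathbf{x})$.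
   Context: A weighted data set is a finite set $\{(w_i,\mathbf{x}_i)\}$ with $w_i\ge1$, $\mathbf{x}_i\in\mathcal{X}$. Distributions $P,Q$ are $\epsilon$-indistinguishable if $P(Y)\le e^\epsilon Q(Y)$ and $Q(Y)\le e^\epsilon P(Y)$ for all measurable $Y$. A weighted distinguishability profile of $\mathcal{M}$ is a function $\epsilon\colon[1,\infty)\times\mathcal{X}\to\mathbb{R}_{\ge0}$ such that for every weighted data set $\mathcal{S}$ and every $(w',\mathbf{x}')$, $\mathcal{M}(\mathcal{S})$ and $\mathcal{M}(\mathcal{S}\cup\{(w',\mathbf{x}')\})$ are $\epsilon(w',\mathbf{x}')$-indistinguishable. A Poisson importance sampler for a function $q\colon\mathcal{X}\to(0,1]$ maps $\mathcal{D}=\{\mathbf{x}_1,\dots,\mathbf{x}_n\}$ to $\{(1/q(\mathbf{x}_i),\mathbf{x}_i)\mid\gamma_i=1\}$ with $\gamma_i$ independent Bernoulli$(q(\mathbf{x}_i))$. *)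

(* Defs.v *)
From HB Require Import structures.
From mathcomp Require Import all_boot all_order all_algebra.
From mathcomp Require Import finmap.
From mathcomp Require Import all_classical all_reals all_analysis.
Set Implicit Arguments. Unset Strict Implicit. Unset Printing Implicit Defensive.
Import Order.TTheory GRing.Theory Num.Theory.
Import numFieldNormedType.Exports.
Local Open Scope classical_set_scope.
Local Open Scope ring_scope.

Definition point (R : realType) (d : nat) := 'rV[R]_d.
Definition wdataset (R : realType) (d : nat) := {fset (R * 'rV[R]_d)}%fset.

Definition wds_over (R : realType) (d : nat) (X : set 'rV[R]_d)
  (S : wdataset R d) : Prop :=
  forall p, p \in S -> 1 <= p.1 /\ X p.2.

Definition indist (R : realType) (dT : measure_display) (T : measurableType dT)
  (e : R) (P Q : probability T R) : Prop :=
  forall Y : set T, measurable Y ->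
    (P Y <= (expR e)%:E * Q Y)%E /\ (Q Y <= (expR e)%:E * P Y)%E.

(* eps : [1,oo) x X -> R_{>=0} is a weighted distinguishability profile of M
   (values of eps outside [1,oo) x X are irrelevant). *)
Definition weighted_profile (R : realType) (d : nat) (X : set 'rV[R]_d)
  (dT : measure_display) (T : measurableType dT)
  (M : wdataset R d -> probability T R) (eps : R -> 'rV[R]_d -> R) : Prop :=
  (forall w x, 1 <= w -> X x -> 0 <= eps w x) /\
  (forall S, wds_over X S -> forall w' x', 1 <= w' -> X x' ->
     indist (eps w' x') (M S) (M (S `|` [fset (w', x')])%fset)).

Definition deriv_on_ge1 (R : realType) (f f' : R -> R) : Prop :=
  (forall w : R, 1 < w -> is_derive w (1 : R) f (f' w)) /\
  ((fun h : R => h^-1 * (f (1 + h) - f 1)) @ 0^'+ --> f' 1).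

Definition psi (R : realType) (d : nat) (eps : R -> 'rV[R]_d -> R)
  (q : 'rV[R]_d -> R) (x : 'rV[R]_d) : R :=
  ln (1 + q x * (expR (eps (q x)^-1 x) - 1)).

Definition eps_tilde (R : realType) (d : nat) (eps : R -> 'rV[R]_d -> R)
  (x : 'rV[R]_d) : R := eps 1 x.

(* Main.v *)
Require Import Defs.
From HB Require Import structures.
From mathcomp Require Import all_boot all_order all_algebra.
From mathcomp Require Import finmap.
From mathcomp Require Import all_classical all_reals all_analysis.
From mathcomp Require Import ring lra.
Import Order.TTheory GRing.Theory Num.Theory.
Import numFieldNormedType.Exports.
Local Open Scope classical_set_scope.
Local Open Scope ring_scope.
Lemma rcont (R : realType) (f : R -> R) (l : R) :
  (fun h : R => h^-1 * (f (1 + h) - f 1)) @ 0^'+ --> l -> f @ 1^'+ --> f 1.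
Proof.
move=> H.
have H0 : (fun h : R => h * (h^-1 * (f (1 + h) - f 1))) @ 0^'+ --> 0 * l.
  apply: cvgM => //; exact: cvg_at_right_filter cvg_id.
rewrite mul0r in H0.
have H1 : (fun h : R => f (1 + h)) @ 0^'+ --> f 1.
  have -> : (fun h : R => f (1 + h)) = (fun h => (f (1 + h) - f 1) + f 1).
    by apply/funext => h; rewrite subrK.
  rewrite -[X in _ --> X]add0r; apply: cvgD; last exact: cvg_cst.
  apply: cvg_trans H0; apply: near_eq_cvg; near=> h.
  rewrite mulrA mulfV ?mul1r //; near: h; exact: nbhs_right_neq.
apply/cvgrPdist_lt => e e0.
have := @cvgr_dist_lt _ _ _ _ _ _ _ H1 _ e0.
rewrite !near_withinE => N.
have {}N := N (@at_right_proper_filter R 0).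
apply: (proj2 (@nbhs0P _ R^o (fun t : R => 1 < t -> `|f 1 - f t| < e) 1)).
apply: filterS N => h /= Hh H2; apply: Hh; by rewrite -(ltrD2l 1) addr0.
Unshelve. all: by end_near.
Qed.

Lemma key (R : realType) (e e' : R -> R) (W : R) :
  1 <= W -> (forall w : R, 1 <= w -> 0 <= e w) ->
  (forall w : R, 1 < w -> is_derive w (1:R) e (e' w)) ->
  (fun h : R => h^-1 * (e (1 + h) - e 1)) @ 0^'+ --> e' 1 ->
  (forall w : R, 1 <= w -> e w <= w * e' w) ->
  expR (e 1) - 1 <= (expR (e W) - 1) / W.
Proof.
move=> W1 e0 de dr Hle.
pose g := fun w : R => (expR (e w) - 1) * w^-1.
have -> : expR (e 1) - 1 = g 1 by rewrite /g invr1 mulr1.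
change (g 1 <= g W).
have dg (w : R) : 1 < w -> is_derive w (1:R) g
   ((expR (e w) - 1) *: (- w ^- 2 *: 1) + w^-1 *: (expR (e w) * e' w - 0)).
  move=> w1.
  have hd := de w w1.
  have he : is_derive w (1:R) (expR \o e) (expR (e w) * e' w).
    exact: is_derive1_comp.
  have hu : is_derive w (1:R) (expR \o e - cst 1) (expR (e w) * e' w - 0).
    exact: is_deriveB.
  have hv : is_derive w (1:R) (fun y : R => y^-1) (- w ^- 2 *: 1).
    apply: (@is_deriveV _ id) => //; rewrite gt_eqF // (lt_trans _ w1) //.
  have := is_deriveM hu hv.
  have -> : (expR \o e - cst 1) * (fun y : R => y^-1) = g by apply/funext.
  done.
have [->|W1'] := eqVneq W 1; first exact: lexx.
have {W1'} W1 : 1 < W by rewrite lt_def W1' W1.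
apply: (@ger0_derive1_ndecr _ g 1 W) => //.
- by move=> w; rewrite in_itv /= => /andP[w1 _]; have := dg w w1; by case.
- move=> w; rewrite in_itv /= => /andP[w1 _].
  rewrite derive1E (@derive_val _ _ _ _ _ _ _ (dg w w1)).
  have w0 : 0 < w by exact: lt_trans w1.
  have E0 : 0 < expR (e w) := expR_gt0 _.
  have hE := expR_ge1Dx (- e w); rewrite expRN in hE.
  have hy : (expR (e w))^-1 * expR (e w) = 1 by rewrite mulVf // gt_eqF.
  have ha := e0 w (ltW w1); have hl := Hle w (ltW w1).
  have hp : 0 <= w * expR (e w) * e' w - expR (e w) + 1.
    move: hE hy ha hl E0 w0; set E := expR (e w); set y := E^-1; set a := e w; set b := e' w.
    move=> *; nra.
  rewrite /GRing.scale /=.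
  have wn0 : w != 0 by rewrite gt_eqF.
  have -> : (expR (e w) - 1) * (- w ^- 2 * 1) + w^-1 * (expR (e w) * e' w - 0)
     = (w * expR (e w) * e' w - expR (e w) + 1) * (w^-1 * w^-1).
    by field.
  by rewrite mulr_ge0 // mulr_ge0 // invr_ge0 ltW.
- apply/continuous_within_itvP => //; split.
  + move=> w; rewrite in_itv /= => /andP[w1 _].
    by have [/derivable1_diffP/differentiable_continuous] := dg w w1.
  + have he : e @ 1^'+ --> e 1 := @rcont R e _ dr.
    have hu : (fun w => expR (e w) - 1) @ 1^'+ --> expR (e 1) - 1.
      apply: cvgB; last exact: cvg_cst.
      apply: (cvg_comp _ _ he); exact: continuous_expR.
    have hv : (fun w : R => w^-1) @ 1^'+ --> (1:R)^-1.
      apply: cvgV => //; exact: cvg_at_right_filter cvg_id.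
    exact: cvgM hu hv.
  + apply: cvg_at_left_filter.
    by have [/derivable1_diffP/differentiable_continuous] := dg W W1.
- exact: ltW.
Qed.

Theorem proposition3 (R : realType) (d : nat) (X : set 'rV[R]_d)
  (dT : measure_display) (T : measurableType dT)
  (M : wdataset R d -> probability T R)
  (eps eps' : R -> 'rV[R]_d -> R)
  (q : 'rV[R]_d -> R) (x : 'rV[R]_d) :
  weighted_profile X M eps ->
  (forall y, X y -> deriv_on_ge1 (fun w => eps w y) (fun w => eps' w y)) ->
  (forall y, X y -> 0 < q y <= 1) ->
  X x ->
  (forall w, 1 <= w -> eps w x <= w * eps' w x) ->
  eps_tilde eps x <= psi eps q x.
Proof.
move=> [epos _] Hder Hq Xx Hle.
have [dint dright] := Hder x Xx.
have /andP[q0 q1] := Hq x Xx.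
have W1 : 1 <= (q x)^-1 by rewrite invf_ge1.
have K := @key R (fun w => eps w x) (fun w => eps' w x) (q x)^-1 W1
  (fun w w1 => epos w x w1 Xx) dint dright Hle.
rewrite invrK /= in K.
rewrite /eps_tilde /psi.
have E1 : 0 < expR (eps 1 x) := expR_gt0 _.
rewrite -{1}(expRK (eps 1 x)) ler_ln ?posrE //; first by rewrite -lerBlDl mulrC.
apply: lt_le_trans E1 _; by rewrite -lerBlDl mulrC.
Qed.
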